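(* Let $n\ge 3$. The center of $U_n$ is $$Z(U_n)=\{(x_1+f(x_2,\dots,x_n),\,x_2,\dots,x_n)\mid f\in K\langle x_2,\dots,x_n\rangle,\ f(x_2+g_2,\dots,x_n+g_n)=f(x_2,\dots,x_n)\text{ for all } g_i\in K\langle x_{i+1},\dots,x_n\rangle\ (2\le i\le n-1),\ g_n\in K\}.$$
   Context: $K$ is a field of characteristic zero and $A_n=K\langle x_1,\dots,x_n\rangle$ is the free associative $K$-algebra with unity. $U_n$ is the group of unitriangular automorphisms of $A_n$: all $K$-automorphisms $(x_1+f_1,\dots,x_n+f_n)$, meaning $x_i\mapsto x_i+f_i$, with $f_i\in K\langle x_{i+1},\dots,x_n\rangle$ for $i<n$ and $f_n\in K$. *)

(* Defs.v *)
(* Noncommutative polynomials K<x_0,...,x_{n-1}> represented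
   as formal (unnormalized) finite sums of monomials (coefficient, word);
   two representations denote the same element iff their coefficient
   functions agree ([peq]). Variables are 0-indexed: x_{i+1} of the paper is
   index i here. *)
From HB Require Import structures.
From mathcomp Require Import all_boot all_order all_algebra.
Set Implicit Arguments. Unset Strict Implicit. Unset Printing Implicit Defensive.
Import GRing.Theory.
Local Open Scope ring_scope.

Section NC.
Variables (K : fieldType) (n : nat).

Definition ncpoly := seq (K * seq 'I_n).

Definition coef (p : ncpoly) (w : seq 'I_n) : K :=
  \sum_(t <- p | t.2 == w) t.1.

Definition peq (p q : ncpoly) : Prop := forall w, coef p w = coef q w.

Definition pX (i : 'I_n) : ncpoly := [:: (1, [:: i])].
Definition pC (c : K) : ncpoly := [:: (c, [::])].
Definition padd (p q : ncpoly) : ncpoly := p ++ q.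
Definition pscale (c : K) (p : ncpoly) : ncpoly := [seq (c * t.1, t.2) | t <- p].
Definition psub (p q : ncpoly) : ncpoly := p ++ pscale (-1) q.
Definition pmul (p q : ncpoly) : ncpoly :=
  [seq (a.1 * b.1, a.2 ++ b.2) | a <- p, b <- q].
Definition pprod (ps : seq ncpoly) : ncpoly := foldr pmul (pC 1) ps.

Definition subst (phi : 'I_n -> ncpoly) (p : ncpoly) : ncpoly :=
  flatten [seq pscale t.1 (pprod (map phi t.2)) | t <- p].

Definition in_sub (i : nat) (p : ncpoly) : Prop :=
  forall w, coef p w != 0 -> all (fun j : 'I_n => (i < j)%N) w.

(* an endomorphism given by the images of the generators is unitriangular:
   phi i = x_i + f_i with f_i in K<x_{i+1},...> (for the last index this
   forces f_i in K) *)
Definition inU (phi : 'I_n -> ncpoly) : Prop :=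
  forall i : 'I_n, in_sub i (psub (phi i) (pX i)).

Definition comp (phi psi : 'I_n -> ncpoly) : 'I_n -> ncpoly :=
  fun i => subst phi (psi i).

Definition aut_eq (phi psi : 'I_n -> ncpoly) : Prop :=
  forall i, peq (phi i) (psi i).

Definition in_center (phi : 'I_n -> ncpoly) : Prop :=
  inU phi /\ forall psi, inU psi -> aut_eq (comp phi psi) (comp psi phi).

End NC.

(* Main.v *)
Require Import Defs.
From HB Require Import structures.
From mathcomp Require Import all_boot all_order all_algebra.
From mathcomp Require Import ring.
Set Implicit Arguments. Unset Strict Implicit. Unset Printing Implicit Defensive.
Import GRing.Theory.
Local Open Scope ring_scope.

Section S.
Variables (K : fieldType) (n : nat).
Local Notation P := (ncpoly K n).
Local Notation W := (seq 'I_n).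
Local Notation delta u w := (if u == w then (1:K) else 0).

Definition lin (p : P) (F : W -> K) := \sum_(t <- p) t.1 * F t.2.

Lemma coef_cat (p q : P) w : coef (p ++ q) w = coef p w + coef q w.
Proof. by rewrite /coef big_cat. Qed.

Lemma coef_scale c (p : P) w : coef (pscale c p) w = c * coef p w.
Proof. by rewrite /coef big_map mulr_sumr. Qed.

Lemma coef_cons (t : K * W) (p : P) w :
  coef (t :: p) w = (if t.2 == w then t.1 else 0) + coef p w.
Proof. by rewrite /coef big_cons; case: ifP => //; rewrite add0r. Qed.

Lemma coef_single c (u : W) w : coef [:: (c, u)] w = c * delta u w.
Proof. by rewrite coef_cons /coef big_nil addr0 /=; case: ifP; rewrite ?mulr1 ?mulr0. Qed.

Lemma coef_pX (j : 'I_n) w : coef (@pX K n j) w = delta [:: j] w.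
Proof. by rewrite coef_single mul1r. Qed.

Lemma coef_psub (p q : P) w : coef (psub p q) w = coef p w - coef q w.
Proof. by rewrite coef_cat coef_scale mulN1r. Qed.

Lemma lin_cons t (p : P) F : lin (t :: p) F = t.1 * F t.2 + lin p F.
Proof. by rewrite /lin big_cons. Qed.

Lemma lin_delta (p : P) v : lin p (fun u => delta u v) = coef p v.
Proof.
rewrite /lin /coef [RHS]big_mkcond; apply: eq_bigr => t _.
by case: ifP; rewrite ?mulr1 ?mulr0.
Qed.

Lemma lin_add (p : P) F G : lin p (fun u => F u + G u) = lin p F + lin p G.
Proof. by rewrite /lin -big_split; apply: eq_bigr => t _; rewrite mulrDr. Qed.

Lemma lin_mulr (p : P) F c : lin p (fun u => F u * c) = lin p F * c.
Proof. by rewrite /lin mulr_suml; apply: eq_bigr => t _; rewrite mulrA. Qed.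

Lemma lin_s (p : P) F (s : seq W) : uniq s -> (forall t, t \in p -> t.2 \in s) ->
  lin p F = \sum_(u <- s) coef p u * F u.
Proof.
move=> us; elim: p => [|t p IH] H.
  by rewrite /lin big_nil big1 // => u _; rewrite /coef big_nil mul0r.
rewrite lin_cons IH; last by move=> t' tp; apply: H; rewrite inE tp orbT.
under [RHS]eq_bigr => u _ do rewrite coef_cons mulrDl.
rewrite big_split /=; congr (_ + _).
rewrite (bigD1_seq t.2) //=; last by apply: H; rewrite inE eqxx.
by rewrite eqxx big1 ?addr0 // => u /negPf; rewrite eq_sym => ->; rewrite mul0r.
Qed.

Lemma lin_peq (p q : P) F : peq p q -> lin p F = lin q F.
Proof.
move=> H; set s := undup [seq t.2 | t <- p ++ q].
have us : uniq s by exact: undup_uniq.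
rewrite (lin_s F us) ?(lin_s F us).
- by apply: eq_bigr => u _; rewrite H.
- by move=> t tq; rewrite mem_undup; apply: map_f; rewrite mem_cat tq orbT.
- by move=> t tp; rewrite mem_undup; apply: map_f; rewrite mem_cat tp.
Qed.

Lemma lin_ext (p : P) F G : (forall u, coef p u != 0 -> F u = G u) ->
  lin p F = lin p G.
Proof.
move=> H; set s := undup [seq t.2 | t <- p].
have us : uniq s by exact: undup_uniq.
have hs : forall t, t \in p -> t.2 \in s.
  by move=> t tp; rewrite mem_undup; apply: map_f.
rewrite !(lin_s _ us hs); apply: eq_bigr => u _.
by case: (eqVneq (coef p u) 0) => [->|/H ->]; rewrite ?mul0r.
Qed.

Lemma coef_pmul (p q : P) w :
  coef (pmul p q) w = lin p (fun u => lin q (fun v => delta (u ++ v) w)).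
Proof.
elim: p => [|a p IH]; first by rewrite /coef /lin !big_nil.
rewrite /pmul allpairs_cons -/(pmul p q) coef_cat IH lin_cons; congr (_ + _).
rewrite /coef /lin big_map big_mkcond mulr_sumr; apply: eq_bigr => b _ /=.
by case: ifP; rewrite ?mulr1 ?mulr0 // mulrC.
Qed.

Lemma pmul_peq (p p' q q' : P) : peq p p' -> peq q q' -> peq (pmul p q) (pmul p' q').
Proof.
move=> Hp Hq w; rewrite !coef_pmul (lin_peq _ Hp); apply: lin_ext => u _.
exact: lin_peq.
Qed.

Lemma pprod_ext (phi phi' : 'I_n -> P) (u : W) :
  (forall j, j \in u -> peq (phi j) (phi' j)) ->
  peq (pprod (map phi u)) (pprod (map phi' u)).
Proof.
elim: u => [|j u IH] H /=; first by [].
apply: pmul_peq; first by apply: H; rewrite inE eqxx.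
by apply: IH => j' ju; apply: H; rewrite inE ju orbT.
Qed.

Lemma pprod_pX (u : W) : pprod (map (@pX K n) u) = [:: (1, u)].
Proof. by elim: u => [|j u IH] //=; rewrite IH /pmul /= mulr1. Qed.

Lemma coef_pprod1 (p : P) w : coef (pprod [:: p]) w = coef p w.
Proof.
rewrite /= coef_pmul -lin_delta; apply: lin_ext => u _.
by rewrite /pC lin_cons /lin big_nil addr0 mul1r cats0.
Qed.

Lemma coef_subst (phi : 'I_n -> P) (p : P) w :
  coef (subst phi p) w = lin p (fun u => coef (pprod (map phi u)) w).
Proof.
elim: p => [|t p IH]; first by rewrite /coef /lin !big_nil.
by rewrite /subst /= coef_cat -/(subst phi p) IH coef_scale lin_cons.
Qed.

Lemma subst_cat (phi : 'I_n -> P) (p q : P) : subst phi (p ++ q) = subst phi p ++ subst phi q.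
Proof. by rewrite /subst map_cat flatten_cat. Qed.

Lemma coef_subst_pX (phi : 'I_n -> P) j w : coef (subst phi (@pX K n j)) w = coef (phi j) w.
Proof. by rewrite coef_subst lin_cons /lin big_nil addr0 mul1r -(coef_pprod1 (phi j)). Qed.

Lemma subst_peq (phi : 'I_n -> P) p q : peq p q -> peq (subst phi p) (subst phi q).
Proof. by move=> H w; rewrite !coef_subst; apply: lin_peq. Qed.

Lemma subst_ext (phi phi' : 'I_n -> P) p :
  (forall u, coef p u != 0 -> forall j, j \in u -> peq (phi j) (phi' j)) ->
  peq (subst phi p) (subst phi' p).
Proof.
move=> H w; rewrite !coef_subst; apply: lin_ext => u Hu.
by apply: pprod_ext; apply: H.
Qed.

Lemma subst_fix (phi : 'I_n -> P) p :
  (forall u, coef p u != 0 -> forall j, j \in u -> peq (phi j) (@pX K n j)) ->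
  peq (subst phi p) p.
Proof.
move=> H w; rewrite coef_subst -lin_delta; apply: lin_ext => u Hu.
by rewrite (pprod_ext (phi' := @pX K n)) ?pprod_pX ?coef_single ?mul1r //; apply: H.
Qed.

Lemma inU_words (phi : 'I_n -> P) k u : inU phi -> coef (phi k) u != 0 ->
  u = [:: k] \/ all (fun j : 'I_n => (k < j)%N) u.
Proof.
move=> HU Hu; case: (eqVneq u [:: k]) => [->|Hne]; first by left.
right; apply: (HU k); rewrite coef_psub coef_pX.
by rewrite ifN ?subr0 // eq_sym.
Qed.

Lemma inU_kk (phi : 'I_n -> P) k : inU phi -> coef (phi k) [:: k] = 1.
Proof.
move=> HU; apply/eqP; rewrite -subr_eq0; apply/negPn/negP => H.
have := HU k [:: k]; rewrite coef_psub coef_pX eqxx => /(_ H) /=.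
by rewrite ltnn.
Qed.

End S.

Section M.
Variables (K : fieldType) (n : nat).
Local Notation P := (ncpoly K n).
Local Notation delta u w := (if u == w then (1:K) else 0).

Lemma central_fix (phi : 'I_n -> P) : inU phi ->
  (forall psi, inU psi -> aut_eq (Defs.comp phi psi) (Defs.comp psi phi)) ->
  forall i : 'I_n, (0 < i)%N -> peq (phi i) (@pX K n i).
Proof.
move=> HU HC i i0.
have kn : (i.-1 < n)%N by apply: leq_ltn_trans (leq_pred i) (ltn_ord i).
pose k := Ordinal kn.
have ki : (k < i)%N by rewrite /= ltn_predL.
pose psi := fun j : 'I_n => if j == k then padd (@pX K n k) (@pX K n i) else @pX K n j.
have HUpsi : inU psi.
  move=> j w; rewrite coef_psub /psi; case: (eqVneq j k) => [->|ne]; last by rewrite subrr eqxx.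
  rewrite coef_cat addrAC subrr add0r coef_pX; case: ifP => [/eqP <- _|_]; last by rewrite eqxx.
  by rewrite /= ki.
move=> w; have := HC psi HUpsi k w; rewrite /Defs.comp {1}/psi eqxx subst_cat coef_cat.
rewrite !coef_subst_pX coef_subst.
rewrite (lin_ext (G := fun u => delta u w + (delta u [:: k]) * delta [:: i] w)).
  rewrite lin_add lin_delta lin_mulr lin_delta inU_kk // mul1r coef_pX.
  by move/addrI.
move=> u Hu; case: (inU_words HU Hu) => [->|Hall].
  by rewrite coef_pprod1 /psi eqxx coef_cat !coef_pX eqxx mul1r.
have Hne : u != [:: k].
  by apply/eqP => E; move: Hall; rewrite E /= ltnn.
rewrite (ifN _ _ Hne) mul0r addr0.
rewrite (pprod_ext (phi' := @pX K n)) ?pprod_pX ?coef_single ?mul1r //.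
move=> j ju; rewrite /psi ifN //; apply/eqP => E.
by move/allP: Hall => /(_ j ju); rewrite E ltnn.
Qed.

End M.

Local Notation delta u w := (if u == w then 1 else 0).

Theorem theorem3 (K : fieldType) (hK : [pchar K] =i pred0) (n : nat)
  (hn : (3 <= n)%N) (phi : 'I_n -> ncpoly K n) :
  in_center phi <->
  exists f : ncpoly K n,
    in_sub 0 f /\
    (forall g : 'I_n -> ncpoly K n,
       (forall i : 'I_n, (0 < i)%N -> in_sub i (g i)) ->
       peq (subst (fun i : 'I_n => if (i : nat) == 0%N then @pX K n i
                                   else padd (@pX K n i) (g i)) f) f) /\
    (forall i : 'I_n,
       peq (phi i) (if (i : nat) == 0%N then padd (@pX K n i) f else @pX K n i)).
Proof.
have n0 : (0 < n)%N by apply: leq_trans hn.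
pose i0 := Ordinal n0.
split.
- move=> [HU HC].
  exists (psub (phi i0) (@pX K n i0)); split; [exact: (HU i0)|split].
  + move=> g Hg w.
    set psi := fun i : 'I_n => _.
    have HUpsi : inU psi.
      move=> j w'; rewrite coef_psub /psi; case: ifP => Hj; first by rewrite subrr eqxx.
      by rewrite coef_cat addrAC subrr add0r; apply: Hg; rewrite lt0n Hj.
    have := HC psi HUpsi i0 w; rewrite /Defs.comp {1}/psi /= coef_subst_pX.
    have Hd : peq (phi i0) (padd (@pX K n i0) (psub (phi i0) (@pX K n i0))).
      by move=> w'; rewrite coef_cat coef_psub addrC subrK.
    rewrite (subst_peq _ Hd) subst_cat coef_cat coef_subst_pX {2}/psi /=.
    by rewrite Hd coef_cat => /addrI.
  + move=> i w; case: ifP => Hi.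
      have -> : i = i0 by apply: val_inj; apply/eqP.
      by rewrite coef_cat coef_psub addrC subrK.
    by apply: (central_fix HU HC); rewrite lt0n Hi.
- move=> [f [Hf [Hinv Hphi]]].
  have Hpos : forall j : 'I_n, (0 < j)%N -> peq (phi j) (@pX K n j).
    by move=> j j0 w; rewrite Hphi ifN // -lt0n.
  have Hz : forall j : 'I_n, (j : nat) = 0%N -> peq (phi j) (padd (@pX K n j) f).
    by move=> j j0 w; rewrite Hphi j0.
  have HU : inU phi.
    move=> i w; rewrite coef_psub; case: (eqVneq (i : nat) 0%N) => [E|E].
      rewrite Hz // coef_cat addrAC subrr add0r E; exact: Hf.
    by rewrite Hpos ?lt0n // subrr eqxx.
  split => // psi Hpsi i w; rewrite /Defs.comp.
  case: (eqVneq (i : nat) 0%N) => [E|E]; last first.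
    rewrite (subst_peq _ (Hpos i _)) ?lt0n // coef_subst_pX.
    apply: subst_fix => u Hu j ju; apply: Hpos.
    case: (inU_words Hpsi Hu) => [Eu|Hall].
      by move: ju; rewrite Eu inE => /eqP ->; rewrite lt0n.
    by move/allP: Hall => /(_ j ju); apply: leq_trans.
  rewrite (subst_peq _ (Hz i E)) subst_cat coef_cat coef_subst_pX.
  rewrite coef_subst.
  rewrite (lin_ext (G := fun u => delta u w + (delta u [:: i]) * coef f w)); last first.
    move=> u Hu; case: (inU_words Hpsi Hu) => [->|Hall].
      by rewrite coef_pprod1 Hz // coef_cat coef_pX eqxx mul1r.
    have Hne : u != [:: i].
      by apply/eqP => Eu; move: Hall; rewrite Eu /= ltnn.
    rewrite (ifN _ _ Hne) mul0r addr0.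
    rewrite (pprod_ext (phi' := @pX K n)) ?pprod_pX ?coef_single ?mul1r //.
    move=> j ju; apply: Hpos.
    by move/allP: Hall => /(_ j ju); rewrite E.
  rewrite lin_add lin_delta lin_mulr lin_delta inU_kk // mul1r; congr (_ + _).
  pose g := fun j : 'I_n => psub (psi j) (@pX K n j).
  have := Hinv g (fun j _ => Hpsi j) w.
  move=> <-; apply: subst_ext => u Hu j ju w'.
  have j0 : (0 < j)%N by move/allP: (Hf u Hu) => /(_ j ju).
  rewrite ifN; last by rewrite -lt0n.
  by rewrite coef_cat coef_psub addrC subrK.
Qed.
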